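(* Let $(H,m,u,\Delta,\varepsilon,\omega,s,\alpha,\beta)$ be a dual quasi-Hopf algebra over a field $\Bbbk$. Then $S:=\beta\ast s\ast\alpha$, i.e. $S(h)=\beta(h_1)s(h_2)\alpha(h_3)$, is a preantipode for $H$.
   Context: A dual quasi-bialgebra is a datum $(H,m,u,\Delta,\varepsilon,\omega)$ where $(H,\Delta,\varepsilon)$ is a coassociative counital coalgebra over $\Bbbk$; $m:H\otimes H\to H$, $hk:=m(h\otimes k)$, and $u:\Bbbk\to H$, $1_H:=u(1)$, are coalgebra maps with $1_Hh=h=h1_H$; and $\omega:H\otimes H\otimes H\to\Bbbk$ is convolution invertible with inverse $\omega^{-1}$, satisfies $\omega(h\otimes k\otimes l)=\varepsilon(h)\varepsilon(k)\varepsilon(l)$ whenever $1_H\in\{h,k,l\}$, the 3-cocycle condition $\omega(h_1\otimes k_1\otimes l_1m_1)\omega(h_2k_2\otimes l_2\otimes m_2)=\omega(k_1\otimes l_1\otimes m_1)\omega(h_1\otimes k_2l_2\otimes m_2)\omega(h_2\otimes k_3\otimes l_3)$, and quasi-associativity $h_1(k_1l_1)\omega(h_2\otimes k_2\otimes l_2)=\omega(h_1\otimes k_1\otimes l_1)(h_2k_2)l_2$ (Sweedler notation $\Delta(h)=h_1\otimes h_2$). A dual quasi-Hopf algebra $(H,m,u,\Delta,\varepsilon,\omega,s,\alpha,\beta)$ is a dual quasi-bialgebra with a coalgebra anti-morphism $s:H\to H$ and $\alpha,\beta\in H^*$ such that for all $h\in H$: $h_1\beta(h_2)s(h_3)=\beta(h)1_H$;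 $s(h_1)\alpha(h_2)h_3=\alpha(h)1_H$; $\omega(h_1\otimes\beta(h_2)s(h_3)\alpha(h_4)\otimes h_5)=\varepsilon(h)=\omega^{-1}(s(h_1)\otimes\alpha(h_2)h_3\beta(h_4)\otimes s(h_5))$. A preantipode for a dual quasi-bialgebra $H$ is a $\Bbbk$-linear map $S:H\to H$ such that for all $x\in H$: $S(x_2)_1\otimes x_1S(x_2)_2=S(x)\otimes 1_H$; $\omega(x_1\otimes S(x_2)\otimes x_3)=\varepsilon(x)$; $S(x_1)_1x_2\otimes S(x_1)_2=1_H\otimes S(x)$. *)

(* Defs.v *)
From HB Require Import structures.
From mathcomp Require Import all_boot all_order all_algebra.
Set Implicit Arguments. Unset Strict Implicit. Unset Printing Implicit Defensive.
Import GRing.Theory.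
Local Open Scope ring_scope.

(* Encoding conventions:
   - the vector space H over the field K is an [lmodType K];
   - an element of H (x) H is represented by a finite list of pairs
     [(x_i, y_i)] standing for sum_i x_i (x) y_i, and two such lists are
     equal as tensors ([teq2]) iff every bilinear map into every K-vector
     space takes the same value on them (universal property of (x));
     similarly for H (x) H (x) H ([teq3]);
   - the comultiplication is a map [Delta : H -> seq (H * H)] giving a
     Sweedler representation of Delta(h); [sw Delta n h] is the list of
     Sweedler (n+1)-tuples of the iterated coproduct, and the i-th leg is
     [t`_i]. *)

Section DQH.
Variables (K : fieldType) (H : lmodType K).

Definition lin1 (W : lmodType K) (f : H -> W) : Prop :=
  forall (a : K) (x y : H), f (a *: x + y) = a *: f x + f y.

Definition linf (f : H -> K) : Prop :=
  forall (a : K) (x y : H), f (a *: x + y) = a * f x + f y.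

Definition bilin (W : lmodType K) (f : H -> H -> W) : Prop :=
  (forall y, lin1 (fun x => f x y)) /\ (forall x, lin1 (f x)).

Definition trilin (W : lmodType K) (f : H -> H -> H -> W) : Prop :=
  [/\ (forall y z, lin1 (fun x => f x y z)),
      (forall x z, lin1 (fun y => f x y z)) &
      (forall x y, lin1 (f x y))].

Definition trilinf (f : H -> H -> H -> K) : Prop :=
  [/\ (forall y z, linf (fun x => f x y z)),
      (forall x z, linf (fun y => f x y z)) &
      (forall x y, linf (f x y))].

Definition teq2 (s t : seq (H * H)) : Prop :=
  forall (W : lmodType K) (f : H -> H -> W), bilin f ->
    \sum_(p <- s) f p.1 p.2 = \sum_(p <- t) f p.1 p.2.

Definition teq3 (s t : seq (H * H * H)) : Prop :=
  forall (W : lmodType K) (f : H -> H -> H -> W), trilin f ->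
    \sum_(p <- s) f p.1.1 p.1.2 p.2 = \sum_(p <- t) f p.1.1 p.1.2 p.2.

Fixpoint sw (Delta : H -> seq (H * H)) (n : nat) (h : H) : seq (seq H) :=
  if n is n'.+1 then [seq p.1 :: t | p <- Delta h, t <- sw Delta n' p.2]
  else [:: [:: h]].

Definition is_coalgebra (Delta : H -> seq (H * H)) (eps : H -> K) : Prop :=
  [/\ (forall (a : K) (x y : H),
         teq2 (Delta (a *: x + y)) ([seq (a *: p.1, p.2) | p <- Delta x] ++ Delta y)),
      linf eps,
      (forall h, teq3 [seq (q.1, q.2, p.2) | p <- Delta h, q <- Delta p.1]
                      [seq (p.1, q.1, q.2) | p <- Delta h, q <- Delta p.2]),
      (forall h, \sum_(p <- Delta h) eps p.1 *: p.2 = h) &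
      (forall h, \sum_(p <- Delta h) eps p.2 *: p.1 = h)].

Definition is_dual_quasi_bialgebra (Delta : H -> seq (H * H)) (eps : H -> K)
    (m : H -> H -> H) (one : H) (omega omegainv : H -> H -> H -> K) : Prop :=
  [/\ is_coalgebra Delta eps,
      bilin m /\
      (forall h k, teq2 (Delta (m h k))
                        [seq (m p.1 q.1, m p.2 q.2) | p <- Delta h, q <- Delta k]) /\
      (forall h k, eps (m h k) = eps h * eps k),
      (* u : K -> H, u(1) = one, is a coalgebra map *)
      teq2 (Delta one) [:: (one, one)] /\ eps one = 1,
      (forall h, m one h = h /\ m h one = h) &
      [/\ trilinf omega /\ trilinf omegainv,
          (forall h k l,
             \sum_(th <- sw Delta 1 h) \sum_(tk <- sw Delta 1 k) \sum_(tl <- sw Delta 1 l)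
               omega th`_0 tk`_0 tl`_0 * omegainv th`_1 tk`_1 tl`_1
             = eps h * eps k * eps l) /\
          (forall h k l,
             \sum_(th <- sw Delta 1 h) \sum_(tk <- sw Delta 1 k) \sum_(tl <- sw Delta 1 l)
               omegainv th`_0 tk`_0 tl`_0 * omega th`_1 tk`_1 tl`_1
             = eps h * eps k * eps l),
          (forall h k l, (h = one \/ k = one \/ l = one) ->
             omega h k l = eps h * eps k * eps l),
          (forall h k l n,
             \sum_(th <- sw Delta 1 h) \sum_(tk <- sw Delta 1 k)
             \sum_(tl <- sw Delta 1 l) \sum_(tn <- sw Delta 1 n)
               omega th`_0 tk`_0 (m tl`_0 tn`_0) * omega (m th`_1 tk`_1) tl`_1 tn`_1
             = \sum_(th <- sw Delta 1 h) \sum_(tk <- sw Delta 2 k)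
               \sum_(tl <- sw Delta 2 l) \sum_(tn <- sw Delta 1 n)
               omega tk`_0 tl`_0 tn`_0 * omega th`_0 (m tk`_1 tl`_1) tn`_1
                 * omega th`_1 tk`_2 tl`_2) &
          (forall h k l,
             \sum_(th <- sw Delta 1 h) \sum_(tk <- sw Delta 1 k) \sum_(tl <- sw Delta 1 l)
               omega th`_1 tk`_1 tl`_1 *: m th`_0 (m tk`_0 tl`_0)
             = \sum_(th <- sw Delta 1 h) \sum_(tk <- sw Delta 1 k) \sum_(tl <- sw Delta 1 l)
               omega th`_0 tk`_0 tl`_0 *: m (m th`_1 tk`_1) tl`_1)]].

Definition is_dual_quasi_hopf (Delta : H -> seq (H * H)) (eps : H -> K)
    (m : H -> H -> H) (one : H) (omega omegainv : H -> H -> H -> K)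
    (s : H -> H) (alpha beta : H -> K) : Prop :=
  [/\ is_dual_quasi_bialgebra Delta eps m one omega omegainv,
      lin1 s /\ (forall h, teq2 (Delta (s h)) [seq (s p.2, s p.1) | p <- Delta h]) /\
      (forall h, eps (s h) = eps h),
      linf alpha /\ linf beta,
      (forall h, \sum_(t <- sw Delta 2 h) beta t`_1 *: m t`_0 (s t`_2) = beta h *: one) /\
      (forall h, \sum_(t <- sw Delta 2 h) alpha t`_1 *: m (s t`_0) t`_2 = alpha h *: one) &
      (forall h, \sum_(t <- sw Delta 4 h)
                   omega t`_0 ((beta t`_1 * alpha t`_3) *: s t`_2) t`_4 = eps h) /\
      (forall h, \sum_(t <- sw Delta 4 h)
                   omegainv (s t`_0) ((alpha t`_1 * beta t`_3) *: t`_2) (s t`_4) = eps h)].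

Definition is_preantipode (Delta : H -> seq (H * H)) (eps : H -> K)
    (m : H -> H -> H) (one : H) (omega : H -> H -> H -> K) (S : H -> H) : Prop :=
  [/\ lin1 S,
      (forall x, teq2 [seq (q.1, m p.1 q.2) | p <- Delta x, q <- Delta (S p.2)]
                      [:: (S x, one)]),
      (forall x, \sum_(t <- sw Delta 2 x) omega t`_0 (S t`_1) t`_2 = eps x) &
      (forall x, teq2 [seq (m q.1 p.2, q.2) | p <- Delta x, q <- Delta (S p.1)]
                      [:: (one, S x)])].

Definition conv_S (Delta : H -> seq (H * H)) (s : H -> H) (alpha beta : H -> K)
    (h : H) : H :=
  \sum_(t <- sw Delta 2 h) (beta t`_0 * alpha t`_2) *: s t`_1.

End DQH.

(* Main.v *)
Require Import Defs.
From HB Require Import structures.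
From mathcomp Require Import all_boot all_order all_algebra zify.
Set Implicit Arguments. Unset Strict Implicit. Unset Printing Implicit Defensive.
Import GRing.Theory.
Local Open Scope ring_scope.


Lemma lin1_0 (K : fieldType) (H W : lmodType K) (f : H -> W) : lin1 f -> f 0 = 0.
Proof. move=> L; have := L 1 0 0; rewrite !scale1r addr0 => /(congr1 (fun v => v - f 0)); rewrite addrK subrr => H0; by rewrite -H0. Qed.

Lemma lin1_add (K : fieldType) (H W : lmodType K) (f : H -> W) : lin1 f -> forall x y, f (x + y) = f x + f y.
Proof. by move=> L x y; rewrite -{1}[x]scale1r L scale1r. Qed.

Lemma lin1_scale (K : fieldType) (H W : lmodType K) (f : H -> W) : lin1 f -> forall a x, f (a *: x) = a *: f x.
Proof. by move=> L a x; rewrite -[a *: x]addr0 L lin1_0 // addr0. Qed.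

Lemma lin1_sum (K : fieldType) (H W : lmodType K) (f : H -> W) (I : Type) (r : seq I) (g : I -> H) :
  lin1 f -> f (\sum_(i <- r) g i) = \sum_(i <- r) f (g i).
Proof. move=> L; elim: r => [|a r IH]; rewrite ?big_nil ?lin1_0 // !big_cons lin1_add //; by rewrite IH. Qed.

Lemma lin1_sumf (K : fieldType) (H W : lmodType K) (I : Type) (r : seq I) (g : I -> H -> W) :
  (forall i, lin1 (g i)) -> lin1 (fun x => \sum_(i <- r) g i x).
Proof.
move=> L a x y; rewrite scaler_sumr -big_split /=; apply: eq_bigr => i _; exact: L.
Qed.

Lemma lin1_scalef (K : fieldType) (H W : lmodType K) (c : K) (g : H -> W) :
  lin1 g -> lin1 (fun x => c *: g x).
Proof. by move=> L a x y; rewrite L scalerDr !scalerA mulrC. Qed.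

Lemma lin1_scalel (K : fieldType) (H W : lmodType K) (c : H -> K) (w : W) :
  lin1 (c : H -> K^o) -> lin1 (fun x => c x *: w).
Proof. by move=> L a x y; rewrite L scalerDl scalerA. Qed.

Lemma lin1_comp (K : fieldType) (H V W : lmodType K) (f : V -> W) (g : H -> V) :
  lin1 f -> lin1 g -> lin1 (fun x => f (g x)).
Proof. by move=> Lf Lg a x y; rewrite Lg Lf. Qed.

Lemma lin1_cst0 (K : fieldType) (H W : lmodType K) : lin1 (fun _ : H => (0 : W)).
Proof. by move=> a x y; rewrite scaler0 addr0. Qed.


Lemma lin1_sumf_in (K : fieldType) (H W : lmodType K) (I : eqType) (r : seq I) (g : I -> H -> W) :
  (forall i, i \in r -> lin1 (g i)) -> lin1 (fun x => \sum_(i <- r) g i x).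
Proof.
move=> L a x y; rewrite scaler_sumr -big_split /= big_seq [RHS]big_seq.
apply: eq_bigr => i Hi; exact: L.
Qed.

Definition ml (K : fieldType) (H W : lmodType K) (n : nat) (F : seq H -> W) :=
  forall l r, (size l + size r = n)%N -> lin1 (fun x => F (l ++ x :: r)).

Definition DLin (K : fieldType) (H : lmodType K) (Delta : H -> seq (H * H)) :=
  forall (W : lmodType K) (f : H -> H -> W), bilin f -> lin1 (fun h => \sum_(p <- Delta h) f p.1 p.2).

Definition CAs (K : fieldType) (H : lmodType K) (Delta : H -> seq (H * H)) :=
  forall (W : lmodType K) (g : H -> H -> H -> W), trilin g -> forall h,
    \sum_(p <- Delta h) \sum_(q <- Delta p.1) g q.1 q.2 p.2 =
    \sum_(p <- Delta h) \sum_(q <- Delta p.2) g p.1 q.1 q.2.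

Lemma sw_cons (K : fieldType) (H W : lmodType K) (Delta : H -> seq (H * H)) n h (F : seq H -> W) :
  \sum_(t <- sw Delta n.+1 h) F t = \sum_(p <- Delta h) \sum_(t <- sw Delta n p.2) F (p.1 :: t).
Proof. by rewrite /= big_allpairs_dep. Qed.

Lemma sw_size (K : fieldType) (H : lmodType K) (Delta : H -> seq (H * H)) n h t :
  t \in sw Delta n h -> size t = n.+1.
Proof.
elim: n h t => [|n IH] h t /=; first by move=> Ht; move: Ht; rewrite mem_seq1 => /eqP ->.
by case/allpairsPdep => p [u [_ Hu ->]] /=; rewrite (IH _ _ Hu).
Qed.

Lemma ml_cons (K : fieldType) (H W : lmodType K) n (F : seq H -> W) a :
  ml n.+1 F -> ml n (fun t => F (a :: t)).
Proof. move=> M l r Hs; apply: (M (a :: l) r); by rewrite /= addSn Hs. Qed.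

Lemma sw_lin (K : fieldType) (H W : lmodType K) (Delta : H -> seq (H * H)) :
  DLin Delta -> forall n (F : seq H -> W), ml n F -> lin1 (fun h => \sum_(t <- sw Delta n h) F t).
Proof.
move=> DL; elim=> [|n IH] F M.
  move=> a x y /=; rewrite !big_seq1; exact: (M [::] [::]).
have B : bilin (fun a b => \sum_(t <- sw Delta n b) F (a :: t)).
  split=> [b|a].
    apply: lin1_sumf_in => t Ht; apply: (M [::] t); by rewrite (sw_size Ht).
  apply: IH; exact: ml_cons.
move=> a x y; rewrite !sw_cons; exact: (DL _ _ B a x y).
Qed.


Lemma swQ (K : fieldType) (H W : lmodType K) (Delta : H -> seq (H * H)) :
  DLin Delta -> CAs Delta -> forall k n h (F : seq H -> W), ml (k + n).+1 F ->
  \sum_(p <- Delta h) \sum_(u <- sw Delta k p.1) \sum_(t <- sw Delta n p.2) F (u ++ t)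
  = \sum_(t <- sw Delta (k + n).+1 h) F t.
Proof.
move=> DL CA; elim=> [|k IH] n h F M.
  by rewrite add0n sw_cons; apply: eq_bigr => p _ /=; rewrite big_seq1.
pose g a b c := \sum_(u <- sw Delta k b) \sum_(t <- sw Delta n c) F (a :: u ++ t).
have Tg : trilin g.
  split=> [b c|a c|a b].
  - apply: lin1_sumf_in => u Hu; apply: lin1_sumf_in => t Ht.
    apply: (M [::] (u ++ t)); rewrite /= size_cat (sw_size Hu) (sw_size Ht); lia.
  - apply: (sw_lin DL) => l r Hs; apply: lin1_sumf_in => t Ht.
    have Ms : (size (a :: l) + size (r ++ t) = (k.+1 + n).+1)%N.
      rewrite /= size_cat (sw_size Ht); lia.
    move=> c0 x y; have := M _ _ Ms c0 x y; by rewrite /= -!catA.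
  - apply: lin1_sumf_in => u Hu; apply: (sw_lin DL) => l r Hs.
    have Ms : (size (a :: u ++ l) + size r = (k.+1 + n).+1)%N.
      rewrite /= size_cat (sw_size Hu); lia.
    move=> c0 x y; have := M _ _ Ms c0 x y; by rewrite /= -!catA.
transitivity (\sum_(p <- Delta h) \sum_(q <- Delta p.1) g q.1 q.2 p.2).
  apply: eq_bigr => p _; rewrite sw_cons; apply: eq_bigr => q _ /=.
  by rewrite /g exchange_big.
rewrite CA // addSn sw_cons; apply: eq_bigr => p _.
rewrite -IH; last exact: ml_cons.
apply: eq_bigr => q _; rewrite /g /=; done.
Qed.

Lemma swsplit (K : fieldType) (H W : lmodType K) (Delta : H -> seq (H * H)) :
  DLin Delta -> CAs Delta -> forall n k h i (F : seq H -> W), (i <= n)%N -> ml (n + k) F ->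
  \sum_(t <- sw Delta n h) \sum_(u <- sw Delta k t`_i) F (take i t ++ u ++ drop i.+1 t)
  = \sum_(t <- sw Delta (n + k) h) F t.
Proof.
move=> DL CA; elim=> [|n IH] k h i F Hi M.
  move: Hi; rewrite leqn0 => /eqP ->; rewrite big_seq1 add0n; apply: eq_bigr => u _.
  by rewrite /= cats0.
rewrite sw_cons; case: i Hi => [|j] Hj.
  transitivity (\sum_(p <- Delta h) \sum_(u <- sw Delta k p.1) \sum_(t <- sw Delta n p.2) F (u ++ t)).
    apply: eq_bigr => p _ /=; rewrite exchange_big /=; apply: eq_bigr => u _.
    by apply: eq_bigr => t _; rewrite drop0.
  rewrite swQ //; first by rewrite addSn addnC.
  by rewrite addnC -addSn.
rewrite addSn sw_cons; apply: eq_bigr => p _ /=.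
rewrite -(IH k p.2 j (fun t => F (p.1 :: t))) //; last by apply: ml_cons; rewrite -addSn.
Qed.


Lemma coalg_DLin (K : fieldType) (H : lmodType K) (Delta : H -> seq (H * H)) eps :
  is_coalgebra Delta eps -> DLin Delta.
Proof.
case=> D _ _ _ _ W f B a x y.
rewrite (D a x y W f B) big_cat big_map /= scaler_sumr; congr (_ + _).
by apply: eq_bigr => p _; rewrite (lin1_scale (B.1 p.2)).
Qed.

Lemma coalg_CAs (K : fieldType) (H : lmodType K) (Delta : H -> seq (H * H)) eps :
  is_coalgebra Delta eps -> CAs Delta.
Proof.
case=> _ _ C _ _ W g T h.
have := C h W g T; rewrite !big_allpairs_dep /=; done.
Qed.

Lemma linf_lin1 (K : fieldType) (H : lmodType K) (f : H -> K) : linf f -> lin1 (f : H -> K^o).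
Proof. done. Qed.

Lemma lk_mulr (K : fieldType) (H : lmodType K) (c : H -> K) (k : K) :
  lin1 (c : H -> K^o) -> lin1 ((fun x => c x * k) : H -> K^o).
Proof. move=> L a x y; rewrite /= (L a x y) /GRing.scale /= mulrDl mulrA //. Qed.

Lemma lk_mull (K : fieldType) (H : lmodType K) (c : H -> K) (k : K) :
  lin1 (c : H -> K^o) -> lin1 ((fun x => k * c x) : H -> K^o).
Proof. move=> L a x y; rewrite /= (L a x y) /GRing.scale /= mulrDr mulrCA //. Qed.

Lemma sw2 (K : fieldType) (H : lmodType K) (Delta : H -> seq (H * H)) n h t :
  t \in sw Delta n h -> t = [seq t`_i | i <- iota 0 n.+1].
Proof.
move/sw_size=> Hs; rewrite -{1}(mkseq_nth 0 t) /mkseq Hs //.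
Qed.

Lemma D2_sum_scale (K : fieldType) (H W : lmodType K) (Delta : H -> seq (H * H)) (g : H -> H -> W)
  (I : Type) (r : seq I) (c : I -> K) (v : I -> H) :
  DLin Delta -> bilin g ->
  \sum_(q <- Delta (\sum_(i <- r) c i *: v i)) g q.1 q.2
  = \sum_(i <- r) c i *: \sum_(q <- Delta (v i)) g q.1 q.2.
Proof.
move=> DL B; have L := DL _ g B.
transitivity (\sum_(i <- r) (fun h => \sum_(q <- Delta h) g q.1 q.2) (c i *: v i)).
  exact: (lin1_sum _ _ L).
apply: eq_bigr => i _; exact: (lin1_scale L).
Qed.

Lemma bilin_pre (K : fieldType) (H W : lmodType K) (f : H -> H -> W) (m : H -> H -> H) (a : H) :
  bilin f -> bilin m -> bilin (fun x y => f x (m a y)).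
Proof. move=> Bf Bm; split=> [y|x]; first exact: Bf.1. exact: lin1_comp (Bf.2 x) (Bm.2 a). Qed.

Lemma bilin_post (K : fieldType) (H W : lmodType K) (f : H -> H -> W) (m : H -> H -> H) (a : H) :
  bilin f -> bilin m -> bilin (fun x y => f (m x a) y).
Proof. move=> Bf Bm; split=> [y|x]; last exact: Bf.2. exact: lin1_comp (Bf.1 y) (Bm.1 a). Qed.

Lemma sw1E (K : fieldType) (H W : lmodType K) (Delta : H -> seq (H * H)) h (F : seq H -> W) :
  \sum_(t <- sw Delta 1 h) F t = \sum_(p <- Delta h) F [:: p.1; p.2].
Proof. by rewrite sw_cons; apply: eq_bigr => p _; rewrite big_seq1. Qed.

Lemma bil_sum_l (K : fieldType) (H W : lmodType K) (f : H -> H -> W) (I : Type) (r : seq I)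
  (c : I -> K) (v : I -> H) b :
  bilin f -> f (\sum_(i <- r) c i *: v i) b = \sum_(i <- r) c i *: f (v i) b.
Proof.
move=> B; transitivity (\sum_(i <- r) (fun y => f y b) (c i *: v i)).
  exact: (lin1_sum _ _ (B.1 b)).
apply: eq_bigr => i _; exact: (lin1_scale (B.1 b)).
Qed.

Lemma bil_sum_r (K : fieldType) (H W : lmodType K) (f : H -> H -> W) (I : Type) (r : seq I)
  (c : I -> K) (v : I -> H) a :
  bilin f -> f a (\sum_(i <- r) c i *: v i) = \sum_(i <- r) c i *: f a (v i).
Proof.
move=> B; rewrite (lin1_sum _ _ (B.2 a)); apply: eq_bigr => i _; exact: (lin1_scale (B.2 a)).
Qed.

Lemma D2_s (K : fieldType) (H W : lmodType K) (Delta : H -> seq (H * H)) (s : H -> H) (g : H -> H -> W) z :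
  (forall h, teq2 (Delta (s h)) [seq (s p.2, s p.1) | p <- Delta h]) -> bilin g ->
  \sum_(q <- Delta (s z)) g q.1 q.2 = \sum_(r <- Delta z) g (s r.2) (s r.1).
Proof. by move=> Ds B; rewrite (Ds z _ g B) big_map. Qed.

Lemma ml_rcons (K : fieldType) (H W : lmodType K) n (F : seq H -> W) b :
  ml n.+1 F -> ml n (fun t => F (t ++ [:: b])).
Proof.
move=> M l r Hs; have Hs' : (size l + size (r ++ [:: b]) = n.+1)%N by rewrite size_cat /= addn1 addnS Hs.
move=> a x y; have := M _ _ Hs' a x y; by rewrite /= -!catA.
Qed.


Theorem theorem3p10 (K : fieldType) (H : lmodType K)
    (Delta : H -> seq (H * H)) (eps : H -> K) (m : H -> H -> H) (one : H)
    (omega omegainv : H -> H -> H -> K) (s : H -> H) (alpha beta : H -> K) :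
  is_dual_quasi_hopf Delta eps m one omega omegainv s alpha beta ->
  is_preantipode Delta eps m one omega (conv_S Delta s alpha beta).
Proof.
case=> [[Co [Bm [Dm _]] _ _ [[Tom _] _ _ _ _]] [Ls [Ds _]] [La Lb] [Hb Ha] [Homega _]].
have DL := coalg_DLin Co; have CA := coalg_CAs Co.
have La' := linf_lin1 La; have Lb' := linf_lin1 Lb.
case: Tom => Om1 Om2 Om3.
split.
- rewrite /conv_S; apply: (sw_lin DL (n := 2) (F := fun t => (beta t`_0 * alpha t`_2) *: s t`_1)).
  move=> l r Hs; case: l Hs => [|? [|? [|? l]]] Hs; case: r Hs => [|? [|? [|? r]]] Hs; rewrite /= in Hs; try lia; rewrite /=.
  + apply: lin1_scalel; apply: lk_mulr; exact: Lb'.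
  + apply: lin1_scalef; exact: Ls.
  + apply: lin1_scalel; apply: lk_mull; exact: La'.
- move=> x W f Bf; rewrite big_allpairs_dep big_seq1 /=.
  pose G (w : seq H) : W := (beta w`_1 * alpha w`_4) *: f (s w`_3) (m w`_0 (s w`_2)).
  have MG : ml 4 G.
    move=> l r Hs; case: l Hs => [|? [|? [|? [|? [|? l]]]]] Hs; case: r Hs => [|? [|? [|? [|? [|? r]]]]] Hs; rewrite /= in Hs; try lia; rewrite /G /=.
    + apply: lin1_scalef; exact: lin1_comp (Bf.2 _) (Bm.1 _).
    + apply: lin1_scalel; apply: lk_mulr; exact: Lb'.
    + apply: lin1_scalef; exact: lin1_comp (Bf.2 _) (lin1_comp (Bm.2 _) Ls).
    + apply: lin1_scalef; exact: lin1_comp (Bf.1 _) Ls.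
    + apply: lin1_scalel; apply: lk_mull; exact: La'.
  transitivity (\sum_(p <- Delta x) \sum_(w <- sw Delta 3 p.2) G (p.1 :: w)).
    apply: eq_bigr => p _.
    rewrite /conv_S (D2_sum_scale _ _ _ DL (bilin_pre p.1 Bf Bm)).
    rewrite -(@swsplit _ _ _ _ DL CA 2 1 p.2 1 (fun w => G (p.1 :: w))) //; last exact: ml_cons.
    rewrite big_seq [RHS]big_seq; apply: eq_bigr => u Hu; rewrite (sw2 Hu) /= sw1E.
    rewrite (D2_s _ Ds (bilin_pre p.1 Bf Bm)) scaler_sumr; apply: eq_bigr => q _; by rewrite /G.
  rewrite -(sw_cons Delta 3 x G) -(@swsplit _ _ _ _ DL CA 2 2 x 0 G) //.
  rewrite /conv_S (bil_sum_l _ _ _ _ Bf) big_seq [RHS]big_seq; apply: eq_bigr => t Ht.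
  rewrite (sw2 Ht) /= mulrC -scalerA -(lin1_scale (Bf.2 _)) -Hb (bil_sum_r _ _ _ _ Bf) scaler_sumr.
  rewrite big_seq [RHS]big_seq; apply: eq_bigr => u Hu; rewrite (sw2 (Delta := Delta) (n := 2) (h := t`_0) Hu) /G /=.
  by rewrite scalerA mulrC.
- move=> x; rewrite -(Homega x).
  pose F (t : seq H) : K^o := omega t`_0 ((beta t`_1 * alpha t`_3) *: s t`_2) t`_4.
  transitivity (\sum_(t <- sw Delta 2 x) \sum_(u <- sw Delta 2 t`_1) F (take 1 t ++ u ++ drop 2 t)).
    rewrite big_seq [RHS]big_seq; apply: eq_bigr => t Ht; rewrite (sw2 Ht) /= /conv_S.
    rewrite (lin1_sum _ _ (linf_lin1 (Om2 t`_0 t`_2))) big_seq [RHS]big_seq; apply: eq_bigr => u Hu.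
    by rewrite (sw2 Hu) /= /F.
  rewrite (@swsplit _ _ _ _ DL CA 2 2 x 1 F) //.
  move=> l r Hs; case: l Hs => [|? [|? [|? [|? [|? l]]]]] Hs; case: r Hs => [|? [|? [|? [|? [|? r]]]]] Hs; rewrite /= in Hs; try lia; rewrite /F /=.
  - exact: linf_lin1 (Om1 _ _).
  - apply: (lin1_comp (f := (fun y => omega _ y _) : H -> K^o)); first exact: linf_lin1 (Om2 _ _).
    apply: lin1_scalel; apply: lk_mulr; exact: Lb'.
  - apply: (lin1_comp (f := (fun y => omega _ y _) : H -> K^o)); first exact: linf_lin1 (Om2 _ _).
    apply: lin1_scalef; exact: Ls.
  - apply: (lin1_comp (f := (fun y => omega _ y _) : H -> K^o)); first exact: linf_lin1 (Om2 _ _).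
    apply: lin1_scalel; apply: lk_mull; exact: La'.
  - exact: linf_lin1 (Om3 _ _).
- move=> x W f Bf; rewrite big_allpairs_dep big_seq1 /=.
  pose G (w : seq H) : W := (beta w`_0 * alpha w`_3) *: f (m (s w`_2) w`_4) (s w`_1).
  have MG : ml 4 G.
    move=> l r Hs; case: l Hs => [|? [|? [|? [|? [|? l]]]]] Hs; case: r Hs => [|? [|? [|? [|? [|? r]]]]] Hs; rewrite /= in Hs; try lia; rewrite /G /=.
    + apply: lin1_scalel; apply: lk_mulr; exact: Lb'.
    + apply: lin1_scalef; exact: lin1_comp (Bf.2 _) Ls.
    + apply: lin1_scalef; exact: lin1_comp (Bf.1 _) (lin1_comp (Bm.1 _) Ls).
    + apply: lin1_scalel; apply: lk_mull; exact: La'.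
    + apply: lin1_scalef; exact: lin1_comp (Bf.1 _) (Bm.2 _).
  transitivity (\sum_(t <- sw Delta 1 x) \sum_(u <- sw Delta 3 t`_0) G (take 0 t ++ u ++ drop 1 t)).
    rewrite sw1E; apply: eq_bigr => p _ /=.
    rewrite /conv_S (D2_sum_scale _ _ _ DL (bilin_post p.2 Bf Bm)).
    rewrite -(@swsplit _ _ _ _ DL CA 2 1 p.1 1 (fun w => G (w ++ [:: p.2]))) //; last exact: ml_rcons.
    rewrite big_seq [RHS]big_seq; apply: eq_bigr => u Hu; rewrite (sw2 Hu) /= sw1E.
    rewrite (D2_s _ Ds (bilin_post p.2 Bf Bm)) scaler_sumr; apply: eq_bigr => q _; by rewrite /G.
  rewrite (@swsplit _ _ _ _ DL CA 1 3 x 0 G) // -(@swsplit _ _ _ _ DL CA 2 2 x 2 G) //.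
  rewrite /conv_S (bil_sum_r _ _ _ _ Bf) big_seq [RHS]big_seq; apply: eq_bigr => t Ht.
  rewrite (sw2 Ht) /= -scalerA -(lin1_scale (Bf.1 _)) -Ha (bil_sum_l _ _ _ _ Bf) scaler_sumr.
  rewrite big_seq [RHS]big_seq; apply: eq_bigr => u Hu; rewrite (sw2 (Delta := Delta) (n := 2) (h := t`_2) Hu) /G /=.
  by rewrite scalerA.
Qed.
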